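(* Let $m\ge 2$ and suppose $B,D\subseteq\mathbb{Z}_m$ are $2$-$\{m;k_1,k_2;\mu\}$ SDS. (i) If, for some $b\in B$, the sets $B\setminus\{b\}$ and $D$ are $2$-$\{m;k_1-1,k_2;\mu-1;\frac{m-1}{2}\}$ ASDS, then $k_1=\frac{m+3}{4}$ and $\mu=\frac{m+3}{16}+\frac{k_2^2-k_2}{m-1}$. (ii) If, for some $b\in\mathbb{Z}_m\setminus(B\cup D)$, the sets $B\cup\{b\}$ and $D$ are $2$-$\{m;k_1+1,k_2;\mu;\frac{m-1}{2}\}$ ASDS, then $k_1=\frac{m-1}{4}$ and $\mu=\frac{m-5}{16}+\frac{k_2^2-k_2}{m-1}$.
   Context: For $B,D\subseteq\mathbb{Z}_m$ and $a\in\mathbb{Z}_m\setminus\{0\}$, let $N_{B,D}(a)=|\{(x,x')\in B\times B: x-x'\equiv a\}|+|\{(y,y')\in D\times D: y-y'\equiv a\}|$ (the total number of solutions of the congruences $x_i-x_j\equiv a$, $y_{i'}-y_{j'}\equiv a \pmod m$ with elements of $B$, resp. $D$). For integers $\mu$ and $0\le t\le m-1$, $B$ and $D$ are $2$-$\{m;k_1,k_2;\mu;t\}$ ASDS (almost supplementary difference sets) if $|B|=k_1$, $|D|=k_2$, $N_{B,D}(a)=\mu$ for exactly $t$ values $a\ne0$, and $N_{B,D}(a)=\mu+1$ for the remaining $m-1-t$ values $a\ne0$. They are $2$-$\{m;k_1,k_2;\mu\}$ SDS (supplementary difference sets) if $|B|=k_1$, $|D|=k_2$ and $N_{B,D}(a)=\mu$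 for all $a\ne 0$. *)

(* Defs.v *)
From HB Require Import structures.
From mathcomp Require Import all_boot all_order all_algebra.
Set Implicit Arguments. Unset Strict Implicit. Unset Printing Implicit Defensive.
Import Order.TTheory GRing.Theory Num.Theory.

Definition ndiff (m : nat) (S : {set 'Z_m}) (a : 'Z_m) : nat :=
  #|[set p : 'Z_m * 'Z_m | [&& p.1 \in S, p.2 \in S & (p.1 - p.2)%R == a]]|.

Definition NBD (m : nat) (B D : {set 'Z_m}) (a : 'Z_m) : nat :=
  ndiff B a + ndiff D a.

Definition SDS (m : nat) (B D : {set 'Z_m}) (k1 k2 : nat) (mu : int) : Prop :=
  [/\ #|B| = k1, #|D| = k2 &
      forall a : 'Z_m, a != 0%R -> Posz (NBD B D a) = mu].

Definition ASDS (m : nat) (B D : {set 'Z_m}) (k1 k2 : nat) (mu : int)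
    (t : nat) : Prop :=
  [/\ #|B| = k1, #|D| = k2, t <= m - 1,
      #|[set a : 'Z_m | (a != 0%R) && (Posz (NBD B D a) == mu)]| = t &
      forall a : 'Z_m, a != 0%R ->
        Posz (NBD B D a) = mu \/ Posz (NBD B D a) = (mu + 1)%R].

(* Main.v *)
Require Import Defs.
From HB Require Import structures.
From mathcomp Require Import all_boot all_order all_algebra.
From mathcomp Require Import zify ring lra.
Import Order.TTheory GRing.Theory Num.Theory.
Local Open Scope ring_scope.

Lemma sum_ndiff m (S : {set 'Z_m}) :
  (\sum_(a : 'Z_m | a != 0%R) ndiff S a + #|S| = #|S| ^ 2)%N.
Proof.
have h0 : ndiff S 0 = #|S|.
  rewrite /ndiff.
  have -> : [set p : 'Z_m * 'Z_m | [&& p.1 \in S, p.2 \in S & p.1 - p.2 == 0]]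
      = [set (x, x) | x in S].
    apply/setP => -[x y]; rewrite inE /= subr_eq0.
    apply/idP/imsetP.
      by case/and3P => xS yS /eqP ->; exists y.
    by case=> z zS [-> ->]; rewrite zS eqxx.
  by rewrite card_imset // => x y [].
have hall : (\sum_a ndiff S a = #|S| ^ 2)%N.
  rewrite -mulnn -cardsX -sum1_card.
  rewrite (partition_big (fun p : 'Z_m * 'Z_m => p.1 - p.2) xpredT) //=.
  apply: eq_bigr => a _; rewrite /ndiff -sum1_card.
  by apply: eq_bigl => -[x y]; rewrite !inE /= andbA.
by rewrite -hall [X in _ = X](bigD1 (0%R : 'Z_m)) //= h0 addnC.
Qed.

Lemma card_nz m (hm : (1 < m)%N) : #|[set a : 'Z_m | a != 0%R]| = (m - 1)%N.
Proof.
have -> : [set a : 'Z_m | a != 0%R] = [set~ 0%R] by apply/setP => a; rewrite !inE.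
by rewrite cardsC1 card_ord Zp_cast // subn1.
Qed.

Lemma sumN m (B D : {set 'Z_m}) :
  \sum_(a : 'Z_m | a != 0%R) (NBD B D a)%:Z =
  (#|B| ^ 2)%N%:Z - #|B|%:Z + (#|D| ^ 2)%N%:Z - #|D|%:Z.
Proof.
rewrite -(big_morph Posz PoszD (erefl (Posz 0))) /NBD big_split /=.
have h1 := sum_ndiff _ B; have h2 := sum_ndiff _ D.
rewrite -h1 -h2 !PoszD; ring.
Qed.

Lemma sum_sds m (hm : (1 < m)%N) (B D : {set 'Z_m}) k1 k2 mu :
  SDS B D k1 k2 mu ->
  \sum_(a : 'Z_m | a != 0%R) (NBD B D a)%:Z = mu *+ (m - 1).
Proof.
case=> _ _ h.
rewrite (eq_bigr (fun _ => mu)) //.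
rewrite -(card_nz _ hm) -sumr_const.
by apply: eq_bigl => a; rewrite inE.
Qed.

Lemma sum_asds m (hm : (1 < m)%N) (B D : {set 'Z_m}) k1 k2 nu t :
  ASDS B D k1 k2 nu t ->
  \sum_(a : 'Z_m | a != 0%R) (NBD B D a)%:Z = (nu + 1) *+ (m - 1) - t%:Z.
Proof.
case=> _ _ _ ht h.
rewrite (eq_bigr (fun a => (nu + 1) - ((Posz (NBD B D a) == nu) : nat)%:Z)); last first.
  move=> a /h [->|->]; first by rewrite eqxx addrK.
  have -> : (nu + 1 == nu) = false.
    by apply/negbTE; rewrite -subr_eq0 addrAC subrr add0r oner_eq0.
  by rewrite subr0.
rewrite sumrB; congr (_ - _).
  rewrite -(card_nz _ hm) -sumr_const.
  by apply: eq_bigl => a; rewrite inE.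
rewrite -ht -(big_morph Posz PoszD (erefl (Posz 0))); congr Posz.
rewrite -sum1_card.
rewrite [RHS](eq_bigl (fun a : 'Z_m => (a != 0%R) && (Posz (NBD B D a) == nu))); last first.
  by move=> a; rewrite inE.
rewrite big_mkcondr /=.
by apply: eq_bigr => a _; case: (_ == _).
Qed.

Theorem lemma3 (m : nat) (hm : (1 < m)%N) (B D : {set 'Z_m})
    (k1 k2 : nat) (mu : int) (hSDS : SDS B D k1 k2 mu) :
  (forall (b : 'Z_m) (t : nat), b \in B ->
     t%:Q = (m%:Q - 1) / 2 ->
     ASDS (B :\ b) D (k1 - 1)%N k2 (mu - 1) t ->
     k1%:Q = (m%:Q + 3) / 4 /\
     mu%:~R = (m%:Q + 3) / 16 + ((k2 ^ 2)%N%:Q - k2%:Q) / (m%:Q - 1))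
  /\
  (forall (b : 'Z_m) (t : nat), b \notin B :|: D ->
     t%:Q = (m%:Q - 1) / 2 ->
     ASDS (b |: B) D (k1 + 1)%N k2 mu t ->
     k1%:Q = (m%:Q - 1) / 4 /\
     mu%:~R = (m%:Q - 5) / 16 + ((k2 ^ 2)%N%:Q - k2%:Q) / (m%:Q - 1)).
Proof.
have E1 := sum_sds _ hm _ _ _ _ _ hSDS.
case: hSDS => hB hD _.
rewrite sumN hB hD -mulr_natr natz in E1.
have Q1 : mu%:~R * (m%:Q - 1) = (k1 ^ 2)%N%:Q - k1%:Q + (k2 ^ 2)%N%:Q - k2%:Q.
  have := congr1 (fun z : int => z%:~R : rat) E1.
  rewrite -subzn ?(ltnW hm) // /= !(intrD, intrM, intrN, intrB).
  by move=> ->.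
split.
  move=> b t bB ht hA.
  have E2 := sum_asds _ hm _ _ _ _ _ _ hA.
  case: hA => hB' hD' _ _ _.
  rewrite sumN hB' hD' -mulr_natr natz subrK in E2.
  have k1p : (0 < k1)%N by rewrite -hB (cardD1 b) bB.
  have F : (t + 2 = 2 * k1)%N.
    rewrite -E1 in E2.
    nia.
  have Ft := congr1 (fun n : nat => (n%:Z)%:~R : rat) F.
  rewrite /= PoszD PoszM !intrD !intrM in Ft.
  have K : k1%:Q = (m%:Q + 3) / 4 by lra.
  split=> //.
  have m1 : m%:Q - 1 != 0.
    rewrite subr_eq0; apply/eqP => h1.
    have : (Posz m)%:~R = (Posz 1)%:~R :> rat by [].
    by move/intr_inj => [] mE; rewrite mE in hm.
  have pX : forall n : nat, ((n ^ 2)%N%:Z)%:~R = (n%:Z)%:~R ^+ 2 :> rat.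
    by move=> n; exact: (natrX _ n 2).
  rewrite !pX in Q1 *.
  have -> : (mu%:~R : rat) = ((k1%:Q) ^+ 2 - k1%:Q + (k2%:Q) ^+ 2 - k2%:Q) / (m%:Q - 1).
    by rewrite -Q1; field; exact: m1.
  by rewrite K; field; exact: m1.
move=> b t bBD ht hA.
have E2 := sum_asds _ hm _ _ _ _ _ _ hA.
case: hA => hB' hD' _ _ _.
rewrite sumN hB' hD' -mulr_natr natz in E2.
have F : (t + 2 * k1 + 1 = m)%N.
  rewrite mulrDl mul1r -E1 in E2.
  nia.
have Ft := congr1 (fun n : nat => (n%:Z)%:~R : rat) F.
rewrite /= !PoszD !intrD addr0 in Ft.
have K : k1%:Q = (m%:Q - 1) / 4 by lra.
split=> //.
have m1 : m%:Q - 1 != 0.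
  rewrite subr_eq0; apply/eqP => h1.
  have : (Posz m)%:~R = (Posz 1)%:~R :> rat by [].
  by move/intr_inj => [] mE; rewrite mE in hm.
have pX : forall n : nat, ((n ^ 2)%N%:Z)%:~R = (n%:Z)%:~R ^+ 2 :> rat.
  by move=> n; exact: (natrX _ n 2).
rewrite !pX in Q1 *.
have -> : (mu%:~R : rat) = ((k1%:Q) ^+ 2 - k1%:Q + (k2%:Q) ^+ 2 - k2%:Q) / (m%:Q - 1).
  by rewrite -Q1; field; exact: m1.
by rewrite K; field; exact: m1.
Qed.
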